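(* Let $A=(A,\wedge,\vee,\cdot,\to,1)$ be a $\mathsf{DLCMI}$ and $f:A\to A$ a function. The following are equivalent: 1. $f$ is compatible. 2. There exists a function $g:A\times A\to A$ satisfying condition (M), compatible in the first variable, and such that for every $a\in A$, $f(a)=\min\{b\in A: g(a,b)\le b\}$. 3. There exists a function $\hat g:A\times A\to A$ satisfying condition (M), compatible in the first variable, and such that for all $a,b\in A$: (i) $\hat g(a,f(a))\le f(a)$ and (ii) $f(a)\le \hat g(a,b)\vee b$.
   Context: An algebra $(A,\wedge,\vee,\cdot,\to,1)$ of type $(2,2,2,2,0)$ is a $\mathsf{DLCMI}$ if for all $a,b,c\in A$: (1) $(A,\wedge,\vee)$ is a distributive lattice; (2) $1$ is its largest element; (3) $(A,\cdot,1)$ is a commutative monoid; (4) $(a\to b)\wedge(a\to c)=a\to(b\wedge c)$; (5) $(a\to c)\wedge(b\to c)=(a\vee b)\to c$; (6) $a\to a=1$; (7) $(a\vee b)\cdot c=(a\cdot c)\vee(b\cdot c)$; (8) $(a\to b)\cdot(b\to c)\le a\to c$; (9) $a\to b\le (a\cdot c)\to(b\cdot c)$. A unary function $h:A\to A$ is compatible if for every congruence $\theta$ of $A$, $(a,b)\in\theta$ implies $(h(a),h(b))\in\theta$. A function $g:A\times A\to A$ satisfies condition (M) if for all $a,b,c\in A$, $c\ge b$ implies $g(a,c)\le g(a,b)$. $g$ is compatible in the first variable if for every $c\in A$ the unary function $x\mapsto g(x,c)$ is compatible. *)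

(* Defs.v *)
Section DLCMI.
Variable A : Type.
Variables (meet join mul imp : A -> A -> A) (one : A).

Definition lle (a b : A) : Prop := meet a b = a.

Record is_DLCMI : Prop := {
  meet_assoc : forall a b c, meet a (meet b c) = meet (meet a b) c;
  join_assoc : forall a b c, join a (join b c) = join (join a b) c;
  meet_comm : forall a b, meet a b = meet b a;
  join_comm : forall a b, join a b = join b a;
  meet_absorb : forall a b, meet a (join a b) = a;
  join_absorb : forall a b, join a (meet a b) = a;
  meet_join_distr : forall a b c, meet a (join b c) = join (meet a b) (meet a c);
  one_top : forall a, lle a one;
  mul_assoc : forall a b c, mul a (mul b c) = mul (mul a b) c;
  mul_comm : forall a b, mul a b = mul b a;
  mul_one : forall a, mul a one = a;
  ax4 : forall a b c, meet (imp a b) (imp a c) = imp a (meet b c);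
  ax5 : forall a b c, meet (imp a c) (imp b c) = imp (join a b) c;
  ax6 : forall a, imp a a = one;
  ax7 : forall a b c, mul (join a b) c = join (mul a c) (mul b c);
  ax8 : forall a b c, lle (mul (imp a b) (imp b c)) (imp a c);
  ax9 : forall a b c, lle (imp a b) (imp (mul a c) (mul b c))
}.

Record is_congruence (theta : A -> A -> Prop) : Prop := {
  cong_refl : forall a, theta a a;
  cong_sym : forall a b, theta a b -> theta b a;
  cong_trans : forall a b c, theta a b -> theta b c -> theta a c;
  cong_meet : forall a b c d, theta a b -> theta c d -> theta (meet a c) (meet b d);
  cong_join : forall a b c d, theta a b -> theta c d -> theta (join a c) (join b d);
  cong_mul : forall a b c d, theta a b -> theta c d -> theta (mul a c) (mul b d);
  cong_imp : forall a b c d, theta a b -> theta c d -> theta (imp a c) (imp b d)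
}.

Definition compatible (h : A -> A) : Prop :=
  forall theta, is_congruence theta -> forall a b, theta a b -> theta (h a) (h b).

Definition condM (g : A -> A -> A) : Prop :=
  forall a b c, lle b c -> lle (g a c) (g a b).

Definition compatible_first (g : A -> A -> A) : Prop :=
  forall c, compatible (fun x => g x c).

Definition is_min (P : A -> Prop) (x : A) : Prop :=
  P x /\ forall y, P y -> lle x y.

End DLCMI.
Arguments lle {A}.
Arguments is_DLCMI {A}.
Arguments is_congruence {A}.
Arguments compatible {A}.
Arguments condM {A}.
Arguments compatible_first {A}.
Arguments is_min {A}.

(* Main.v *)
Require Import Defs.
From Stdlib Require Import Setoid.

Section S.
Variable A : Type.
Variables (meet join mul imp : A -> A -> A) (one : A).
Hypothesis HA : is_DLCMI meet join mul imp one.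

Lemma meet_idem a : meet a a = a.
Proof.
  rewrite <- (join_absorb _ _ _ _ _ _ HA a a) at 2.
  apply (meet_absorb _ _ _ _ _ _ HA).
Qed.

Lemma lle_refl a : lle meet a a.
Proof. apply meet_idem. Qed.

Lemma lle_trans x y z : lle meet x y -> lle meet y z -> lle meet x z.
Proof.
  unfold lle; intros H1 H2.
  rewrite <- H1, <- (meet_assoc _ _ _ _ _ _ HA), H2; reflexivity.
Qed.

Lemma lle_joinl a b : lle meet a (join a b).
Proof. apply (meet_absorb _ _ _ _ _ _ HA). Qed.

Lemma lle_joinr a b : lle meet b (join a b).
Proof. unfold lle; rewrite (join_comm _ _ _ _ _ _ HA); apply lle_joinl. Qed.

Lemma l3to1 (f : A -> A) :
  (exists gh : A -> A -> A,
     condM meet gh /\ compatible_first meet join mul imp gh /\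
     forall a b, lle meet (gh a (f a)) (f a) /\ lle meet (f a) (join (gh a b) b))
  -> compatible meet join mul imp f.
Proof.
  intros [gh [_ [Hc Hg]]] th Hth a b Hab.
  assert (K : forall a b, th a b -> th (f a) (meet (f a) (f b))).
  { clear a b Hab. intros a b Hab.
    destruct (Hg a (f b)) as [_ H2].
    destruct (Hg b (f b)) as [H3 _].
    assert (E : th (join (gh a (f b)) (f b)) (f b)).
    {
      apply (cong_trans _ _ _ _ _ _ Hth) with (join (gh b (f b)) (f b)).
      - apply (cong_join _ _ _ _ _ _ Hth). apply (Hc (f b) th Hth a b Hab).
        apply (cong_refl _ _ _ _ _ _ Hth).
      - rewrite (join_comm _ _ _ _ _ _ HA).
        unfold lle in H3. rewrite (meet_comm _ _ _ _ _ _ HA) in H3.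
        rewrite <- H3. rewrite (join_absorb _ _ _ _ _ _ HA).
        apply (cong_refl _ _ _ _ _ _ Hth). }
    unfold lle in H2. rewrite <- H2 at 1.
    apply (cong_meet _ _ _ _ _ _ Hth). apply (cong_refl _ _ _ _ _ _ Hth). exact E. }
  apply (cong_trans _ _ _ _ _ _ Hth) with (meet (f a) (f b)). apply K; exact Hab.
  rewrite (meet_comm _ _ _ _ _ _ HA). apply (cong_sym _ _ _ _ _ _ Hth).
  apply K. apply (cong_sym _ _ _ _ _ _ Hth); exact Hab.
Qed.

End S.

Theorem proposition4p8 (A : Type) (meet join mul imp : A -> A -> A) (one : A)
  (HA : is_DLCMI meet join mul imp one) (f : A -> A) :
  (compatible meet join mul imp f <->
   exists g : A -> A -> A,
     condM meet g /\ compatible_first meet join mul imp g /\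
     forall a, is_min meet (fun b => lle meet (g a b) b) (f a)) /\
  (compatible meet join mul imp f <->
   exists gh : A -> A -> A,
     condM meet gh /\ compatible_first meet join mul imp gh /\
     forall a b, lle meet (gh a (f a)) (f a) /\ lle meet (f a) (join (gh a b) b)).
Proof.
  split; split.
  - intros Hf. exists (fun a _ => f a). split; [|split].
    + intros a b c _. apply (lle_refl _ _ _ _ _ _ HA).
    + intros c. exact Hf.
    + intros a. split. apply (lle_refl _ _ _ _ _ _ HA). intros y H; exact H.
  - intros [g [HM [Hc Hm]]]. apply (l3to1 _ _ _ _ _ _ HA).
    exists g. split; [exact HM|split; [exact Hc|]].
    intros a b. destruct (Hm a) as [H1 H2]. split. exact H1.
    apply H2. apply (lle_trans _ _ _ _ _ _ HA) with (g a b).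
    apply HM. apply (lle_joinr _ _ _ _ _ _ HA).
    apply (lle_joinl _ _ _ _ _ _ HA).
  - intros Hf. exists (fun a _ => f a). split; [|split].
    + intros a b c _. apply (lle_refl _ _ _ _ _ _ HA).
    + intros c. exact Hf.
    + intros a b. split. apply (lle_refl _ _ _ _ _ _ HA). apply (lle_joinl _ _ _ _ _ _ HA).
  - apply (l3to1 _ _ _ _ _ _ HA).
Qed.
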